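(* Let $\phi:R\to S$ be an epimorphism of commutative rings, where $S$ is a nonzero ring whose only idempotents are $0$ and $1$. Suppose $\phi(r)$ has a pointwise inverse in $S$ for every $r\in R$. Then $A=\mathrm{Im}(\phi)$ is an integral domain, and the ring map from the field of fractions of $A$ to $S$ extending the inclusion $A\subseteq S$ exists and is an isomorphism; in particular $S$ is a field isomorphic to the fraction field of $A$.
   Context: For $a,b$ in a commutative ring, $b$ is a pointwise inverse of $a$ if $a=a^2b$ and $b=b^2a$. Epimorphism means epimorphism in the category of commutative rings. *)

(* Defs.v *)
From HB Require Import structures.
From mathcomp Require Import all_boot all_order all_algebra.
From mathcomp Require Import fraction.
Set Implicit Arguments. Unset Strict Implicit. Unset Printing Implicit Defensive.
Import GRing.Theory.
Local Open Scope ring_scope.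

Definition pw_inverse (S : comPzRingType) (a b : S) : Prop :=
  a = a ^+ 2 * b /\ b = b ^+ 2 * a.

Definition ring_epi (R S : comPzRingType) (phi : {rmorphism R -> S}) : Prop :=
  forall (T : comPzRingType) (g h : {rmorphism S -> T}),
    (forall r : R, g (phi r) = h (phi r)) -> forall s : S, g s = h s.

Definition only_trivial_idempotents (S : comPzRingType) : Prop :=
  forall e : S, e * e = e -> e = 0 \/ e = 1.

Definition in_image (R S : Type) (phi : R -> S) (s : S) : Prop :=
  exists r : R, phi r = s.

(* Main.v *)
Require Import Defs.
From HB Require Import structures.
From mathcomp Require Import all_boot all_order all_algebra.
From mathcomp Require Import fraction.
From mathcomp Require Import boolp classical_sets.
From mathcomp Require Import ring.
From Stdlib Require Import FunctionalExtensionality ProofIrrelevance.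
From Stdlib Require Import ClassicalEpsilon Classical_Prop.
Set Implicit Arguments. Unset Strict Implicit. Unset Printing Implicit Defensive.
Import GRing.Theory.
Local Open Scope ring_scope.

Section NDef.
Variables (S : comPzRingType) (P : S -> Prop).
Definition linP (f : S -> S) : Prop :=
  (forall x y, f (x + y) = f x + f y) /\ (forall a x, P a -> f (a * x) = a * f x).
Definition NT := {f : S -> S | linP f}.
End NDef.

HB.instance Definition _ (S : comPzRingType) (P : S -> Prop) := gen_eqMixin (NT P).
HB.instance Definition _ (S : comPzRingType) (P : S -> Prop) := gen_choiceMixin (NT P).

Section NOps.
Variables (S : comPzRingType) (P : S -> Prop).
Local Notation N := (NT P).

Lemma N_inj (n m : N) : (forall t, proj1_sig n t = proj1_sig m t) -> n = m.
Proof.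
case: n m => f hf [g hg] /= H.
have E : f = g by apply: functional_extensionality.
subst g; by rewrite (proof_irrelevance _ hf hg).
Qed.

Lemma lin0 : linP P (fun _ => 0).
Proof. by split => [x y|a x _]; rewrite ?addr0 ?mulr0. Qed.
Lemma linD (f g : S -> S) : linP P f -> linP P g -> linP P (fun t => f t + g t).
Proof.
move=> [f1 f2] [g1 g2]; split => [x y|a x Pa]; first by rewrite f1 g1 addrACA.
by rewrite f2 // g2 // mulrDr.
Qed.
Lemma linN (f : S -> S) : linP P f -> linP P (fun t => - f t).
Proof.
move=> [f1 f2]; split => [x y|a x Pa]; first by rewrite f1 opprD.
by rewrite f2 // mulrN.
Qed.

Definition nzero : N := exist _ _ lin0.
Definition nadd (n m : N) : N := exist _ _ (linD (proj2_sig n) (proj2_sig m)).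
Definition nopp (n : N) : N := exist _ _ (linN (proj2_sig n)).

Lemma naddA : associative nadd.
Proof. by move=> ? ? ?; apply: N_inj => t /=; rewrite addrA. Qed.
Lemma naddC : commutative nadd.
Proof. by move=> ? ?; apply: N_inj => t /=; rewrite addrC. Qed.
Lemma nadd0 : left_id nzero nadd.
Proof. by move=> ?; apply: N_inj => t /=; rewrite add0r. Qed.
Lemma naddN : left_inverse nzero nopp nadd.
Proof. by move=> ?; apply: N_inj => t /=; rewrite addNr. Qed.
End NOps.

HB.instance Definition _ (S : comPzRingType) (P : S -> Prop) :=
  GRing.isZmodule.Build (NT P) (@naddA S P) (@naddC S P) (@nadd0 S P) (@naddN S P).

Section TDef.
Variables (S : comPzRingType) (P : S -> Prop).
Local Notation N := (NT P).

Lemma Nval_add (n m : N) t : proj1_sig (n + m) t = proj1_sig n t + proj1_sig m t.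
Proof. by []. Qed.
Lemma Nval_opp (n : N) t : proj1_sig (- n) t = - proj1_sig n t.
Proof. by []. Qed.
Lemma Nval_0 t : proj1_sig (0 : N) t = 0.
Proof. by []. Qed.

Lemma linL (x : S) (f : S -> S) : linP P f -> linP P (fun t => x * f t).
Proof.
move=> [f1 f2]; split => [a b|a b Pa]; first by rewrite f1 mulrDr.
by rewrite f2 // mulrCA.
Qed.
Lemma linR (y : S) (f : S -> S) : linP P f -> linP P (fun t => f (y * t)).
Proof.
move=> [f1 f2]; split => [a b|a b Pa]; first by rewrite mulrDr f1.
by rewrite /= mulrCA (f2 a).
Qed.
Definition Lm (x : S) (n : N) : N := exist _ _ (linL x (proj2_sig n)).
Definition Rm (y : S) (n : N) : N := exist _ _ (linR y (proj2_sig n)).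

Definition addN (G : N -> N) := forall n m, G (n + m) = G n + G m.
Definition Cp (G : N -> N) := addN G /\ (forall x n, G (Lm x n) = Lm x (G n))
   /\ (forall y n, G (Rm y n) = Rm y (G n)).

Record Tr := MkT { tf : N -> N; tadd : addN tf;
  tcom : forall G, Cp G -> forall n, tf (G n) = G (tf n) }.

Lemma Tr_inj (F G : Tr) : (forall n, tf F n = tf G n) -> F = G.
Proof.
case: F G => f fa fc [g ga gc] /= H.
have E : f = g by apply: functional_extensionality.
subst g; by rewrite (proof_irrelevance _ fa ga) (proof_irrelevance _ fc gc).
Qed.

Lemma addN0 G : addN G -> G 0 = 0.
Proof.
move=> H; have E := H 0 0; rewrite addr0 in E.
symmetry; apply: (addrI (G 0)); by rewrite addr0 -E.
Qed.
Lemma addNN G : addN G -> forall n, G (- n) = - G n.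
Proof.
move=> H n; apply: (addrI (G n)); by rewrite -H !subrr (addN0 H).
Qed.

Lemma Lm_Cp x : Cp (Lm x).
Proof.
split; first by move=> n m; apply: N_inj => t /=; rewrite mulrDr.
split=> [x' n|y n]; apply: N_inj => t //=; by rewrite mulrCA.
Qed.
Lemma Rm_Cp y : Cp (Rm y).
Proof.
split; first by move=> n m; apply: N_inj => t /=.
split=> [x' n|y' n]; apply: N_inj => t //=; by rewrite mulrCA.
Qed.

Definition tzero : Tr := @MkT (fun _ => 0) (fun n m => esym (addr0 0))
  (fun G HG n => esym (addN0 HG.1)).
Definition tone : Tr := @MkT id (fun n m => erefl) (fun G HG n => erefl).
Definition taddT (F G : Tr) : Tr.
refine (@MkT (fun n => tf F n + tf G n) _ _).
- by move=> n m; rewrite !tadd addrACA.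
- by move=> H HH n; rewrite (tcom F HH) (tcom G HH) HH.1.
Defined.
Definition toppT (F : Tr) : Tr.
refine (@MkT (fun n => - tf F n) _ _).
- by move=> n m; rewrite tadd opprD.
- by move=> H HH n; rewrite (tcom F HH) (addNN HH.1).
Defined.
Definition tmulT (F G : Tr) : Tr.
refine (@MkT (fun n => tf F (tf G n)) _ _).
- by move=> n m; rewrite !tadd.
- by move=> H HH n; rewrite (tcom G HH) (tcom F HH).
Defined.

Lemma taddA : associative taddT.
Proof. by move=> ? ? ?; apply: Tr_inj => n /=; rewrite addrA. Qed.
Lemma taddC : commutative taddT.
Proof. by move=> ? ?; apply: Tr_inj => n /=; rewrite addrC. Qed.
Lemma tadd0 : left_id tzero taddT.
Proof. by move=> ?; apply: Tr_inj => n /=; rewrite add0r. Qed.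
Lemma taddN : left_inverse tzero toppT taddT.
Proof. by move=> ?; apply: Tr_inj => n /=; rewrite addNr. Qed.
Lemma tmulA : associative tmulT.
Proof. by move=> ? ? ?; apply: Tr_inj. Qed.
Lemma tmulC : commutative tmulT.
Proof.
move=> F G; apply: Tr_inj => n /=; apply: tcom; split; first exact: tadd.
split=> [x m|y m]; apply: tcom; [exact: Lm_Cp | exact: Rm_Cp].
Qed.
Lemma tmul1 : left_id tone tmulT.
Proof. by move=> ?; apply: Tr_inj. Qed.
Lemma tmulDl : left_distributive tmulT taddT.
Proof. by move=> ? ? ?; apply: Tr_inj. Qed.
End TDef.

HB.instance Definition _ (S : comPzRingType) (P : S -> Prop) := gen_eqMixin (Tr P).
HB.instance Definition _ (S : comPzRingType) (P : S -> Prop) := gen_choiceMixin (Tr P).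
HB.instance Definition _ (S : comPzRingType) (P : S -> Prop) :=
  GRing.isZmodule.Build (Tr P) (@taddA S P) (@taddC S P) (@tadd0 S P) (@taddN S P).
HB.instance Definition _ (S : comPzRingType) (P : S -> Prop) :=
  GRing.Zmodule_isComPzRing.Build (Tr P) (@tmulA S P) (@tmulC S P) (@tmul1 S P) (@tmulDl S P).


Section Homs.
Variables (S : comPzRingType) (P : S -> Prop).
Definition gL (x : S) : Tr P := @MkT S P (@Lm S P x) (proj1 (Lm_Cp P x))
  (fun G HG n => esym (HG.2.1 x n)).
Definition hR (x : S) : Tr P := @MkT S P (@Rm S P x) (proj1 (Rm_Cp P x))
  (fun G HG n => esym (HG.2.2 x n)).

Lemma gL_zmod : zmod_morphism gL.
Proof. move=> x y; apply: Tr_inj => n; apply: N_inj => t /=. by rewrite mulrBl. Qed.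
Lemma gL_mon : monoid_morphism gL.
Proof.
split; first by apply: Tr_inj => n; apply: N_inj => t /=; rewrite mul1r.
move=> x y; apply: Tr_inj => n; apply: N_inj => t /=; by rewrite mulrA.
Qed.
Lemma hR_zmod : zmod_morphism hR.
Proof.
move=> x y; apply: Tr_inj => n; apply: N_inj => t /=.
case: n => f [f1 f2] /=. rewrite mulrBl. 
have fN : forall a, f (- a) = - f a.
  move=> a; apply: (addrI (f a)); rewrite -f1 !subrr.
  have E := f1 0 0; rewrite addr0 in E.
  symmetry; apply: (addrI (f 0)); by rewrite addr0 -E.
by rewrite f1 fN.
Qed.
Lemma hR_mon : monoid_morphism hR.
Proof.
split; first by apply: Tr_inj => n; apply: N_inj => t /=; rewrite mul1r.
move=> x y; apply: Tr_inj => n; apply: N_inj => t /=; by rewrite mulrCA mulrA.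
Qed.
End Homs.

HB.instance Definition _ (S : comPzRingType) (P : S -> Prop) :=
  GRing.isZmodMorphism.Build S (Tr P) (@gL S P) (@gL_zmod S P).
HB.instance Definition _ (S : comPzRingType) (P : S -> Prop) :=
  GRing.isMonoidMorphism.Build S (Tr P) (@gL S P) (@gL_mon S P).
HB.instance Definition _ (S : comPzRingType) (P : S -> Prop) :=
  GRing.isZmodMorphism.Build S (Tr P) (@hR S P) (@hR_zmod S P).
HB.instance Definition _ (S : comPzRingType) (P : S -> Prop) :=
  GRing.isMonoidMorphism.Build S (Tr P) (@hR S P) (@hR_mon S P).


Section Proj.
Variables (S : comNzRingType) (K : S -> Prop).
Hypotheses (K0 : K 0) (K1 : K 1) (KD : forall x y, K x -> K y -> K (x + y))
  (KM : forall x y, K x -> K y -> K (x * y)) (KN : forall x, K x -> K (- x))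
  (Kinv : forall x, K x -> x != 0 -> exists y, K y /\ x * y = 1).
Variable s : S.
Hypothesis nKs : ~ K s.

Definition closedW (W : S -> Prop) :=
  (forall x y, W x -> W y -> W (x + y)) /\ (forall k x, K k -> W x -> W (k * x)).
Definition PW (W : set S) := W = set0 \/ (closedW W /\ W s /\ ~ W 1).

Lemma exists_proj : exists p : S -> S, (forall x y, p (x + y) = p x + p y) /\
  (forall k x, K k -> p (k * x) = k * p x) /\ p 1 = 1 /\ p s = 0.
Proof.
have [W [PWW Wmax]] : exists A, PW A /\ forall B, (A `<` B)%classic -> ~ PW B.
  apply: Zorn_bigcup => F FP Ftot.
  case: (classic (exists X, F X /\ X <> set0)) => [[X0 [FX0 X0n]]|Hall]; last first.
    left; apply/seteqP; split => // x [X FX Xx].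
    apply: Hall; exists X; split => // E; by rewrite E in Xx.
  have FXc : forall X, F X -> forall x, X x -> closedW X /\ X s /\ ~ X 1.
    move=> X FX x Xx; case: (FP X FX) => // E; by rewrite E in Xx.
  right; split; [split|split].
  - move=> x y [X FX Xx] [Y FY Yy].
    case: (Ftot X Y FX FY) => [XY|YX].
    + exists Y => //; have [[c _] _] := FXc Y FY y Yy; apply: c => //; exact: XY.
    + exists X => //; have [[c _] _] := FXc X FX x Xx; apply: c => //; exact: YX.
  - move=> k x Kk [X FX Xx]; exists X => //.
    have [[_ c] _] := FXc X FX x Xx; exact: c.
  - case: (FP X0 FX0) => // [[_ [Hs _]]]; by exists X0.
  - move=> [X FX X1]; have [_ [_ H]] := FXc X FX 1 X1; exact: H.
have [Wc [Ws W1]] : closedW W /\ W s /\ ~ W 1.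
  case: PWW => // E; exfalso; apply: (Wmax (fun y => exists k, K k /\ y = k * s)).
    split; first by rewrite E.
    rewrite E => /(_ s); apply; first by exists 1; rewrite mul1r.
  right; split; [split|split].
  - move=> x y [k [Kk ->]] [k' [Kk' ->]]; exists (k + k'); split; first exact: KD.
    by rewrite mulrDl.
  - move=> k x Kk [k' [Kk' ->]]; exists (k * k'); split; first exact: KM.
    by rewrite mulrA.
  - by exists 1; rewrite mul1r.
  - move=> [k [Kk E1]]; have [k0|kn0] := eqVneq k 0.
      by move: E1; rewrite k0 mul0r => /eqP; rewrite oner_eq0.
    have [k' [Kk' kk']] := Kinv Kk kn0.
    apply: nKs; have -> : s = k'.
      by rewrite -[s]mul1r -kk' mulrAC -E1 mul1r.
    exact: Kk'.
have [WD WM] := Wc.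
have W0 : W 0 by rewrite -(mul0r s); exact: WM.
have WN : forall x, W x -> W (- x).
  by move=> x Wx; rewrite -mulN1r; apply: WM => //; exact: KN.
have uniq : forall x k1 k2, K k1 -> K k2 -> W (x - k1) -> W (x - k2) -> k1 = k2.
  move=> x k1 k2 K1' K2' W1' W2'; apply/eqP; rewrite -subr_eq0; apply/negPn/negP => nz.
  have [k' [Kk' kk']] := Kinv (KD K1' (KN K2')) nz.
  apply: W1; rewrite -kk' mulrC; apply: WM => //.
  have -> : k1 - k2 = (x - k2) + - (x - k1) by ring.
  apply: WD => //; exact: WN.
have dec : forall x, exists k, K k /\ W (x - k).
  move=> x; apply: NNPP => H.
  pose W' := fun y => exists w k, W w /\ K k /\ y = w + k * x.
  apply: (Wmax W').
    split; first by move=> y Wy; exists y, 0; rewrite mul0r addr0.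
    move=> sub; have Wx : W x.
      by apply: sub; exists 0, 1; rewrite mul1r add0r.
    apply: H; exists 0; by rewrite subr0.
  right; split; [split|split].
  - move=> y z [w [k [Ww [Kk ->]]]] [w' [k' [Ww' [Kk' ->]]]].
    exists (w + w'), (k + k'); split; first exact: WD.
    by split; [exact: KD | rewrite mulrDl addrACA].
  - move=> k y Kk [w [k' [Ww [Kk' ->]]]].
    exists (k * w), (k * k'); split; first exact: WM.
    by split; [exact: KM | rewrite mulrDr mulrA].
  - by exists s, 0; rewrite mul0r addr0.
  - move=> [w [k [Ww [Kk E1]]]]; have [k0|kn0] := eqVneq k 0.
      by apply: W1; rewrite E1 k0 mul0r addr0.
    have [k' [Kk' kk']] := Kinv Kk kn0.
    apply: H; exists k'; split => //.
    have -> : x - k' = (- k') * w.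
      transitivity (x * (k * k') - k' * (w + k * x)); first by rewrite kk' -E1 !mulr1.
      ring.
    by apply: WM => //; exact: KN.
pose p x := epsilon (inhabits 0) (fun k => K k /\ W (x - k)).
have pP : forall x, K (p x) /\ W (x - p x).
  move=> x; exact: (epsilon_spec (inhabits 0) (fun k => K k /\ W (x - k)) (dec x)).
have pE : forall x k, K k -> W (x - k) -> p x = k.
  move=> x k Kk Wk; have [Kp Wp] := pP x; exact: (uniq x).
exists p; split; [|split; [|split]].
- move=> x y; apply: pE; first by apply: KD; [exact: (pP x).1 | exact: (pP y).1].
  by rewrite opprD addrACA; apply: WD; [exact: (pP x).2 | exact: (pP y).2].
- move=> k x Kk; apply: pE; first by apply: KM => //; exact: (pP x).1.
  by rewrite -mulrBr; apply: WM => //; exact: (pP x).2.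
- by apply: pE => //; rewrite subrr.
- by apply: pE => //; rewrite subr0.
Qed.
End Proj.

Lemma divB_gen (F : fieldType) (a b c e : F) : b != 0 -> e != 0 ->
  a / b - c / e = (a * e - c * b) / (b * e).
Proof. move=> h1 h2. field. by rewrite h1 h2. Qed.

Local Open Scope quotient_scope.
Lemma frac_rep (D : idomainType) (x : {fraction D}) :
  exists n d, d != 0 /\ x = (FracField.tofrac n) / (FracField.tofrac d).
Proof.
elim/quotW: x => r.
case: r => [[n d] /= dn0].
exists n, d; split => //.
have dF : (@FracField.tofrac D d != 0) by rewrite tofrac_eq0.
apply: (mulIf dF).
rewrite divfK ?tofrac_eq0 //.
unlock FracField.tofrac.
rewrite !piE; apply/eqmodP; rewrite /= FracField.equivfE /FracField.mulf /=.
rewrite !numden_Ratio ?mulf_neq0 ?oner_eq0 //=.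
by rewrite !mulr1 mulrC.
Qed.


Definition mk_rmorph (R S : comPzRingType) (f : R -> S)
  (H : zmod_morphism f * monoid_morphism f) : R -> S := f.
HB.instance Definition _ (R S : comPzRingType) (f : R -> S) H :=
  GRing.isZmodMorphism.Build R S (@mk_rmorph R S f H) H.1.
HB.instance Definition _ (R S : comPzRingType) (f : R -> S) H :=
  GRing.isMonoidMorphism.Build R S (@mk_rmorph R S f H) H.2.

Lemma epi_sep (R : comPzRingType) (S : comPzRingType) (phi : {rmorphism R -> S}) :
  ring_epi phi -> forall f : S -> S, linP (in_image phi) f -> forall s, s * f 1 = f s.
Proof.
move=> epi f hf s.
have E : gL (in_image phi) s = hR (in_image phi) s.
  apply: (epi (Tr (in_image phi)) (gL (in_image phi)) (hR (in_image phi))) => r.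
  apply: Tr_inj => n; apply: N_inj => t /=.
  case: n => g [g1 g2] /=; symmetry; apply: g2; by exists r.
have := congr1 (fun F : Tr (in_image phi) => proj1_sig (tf F (exist _ f hf)) 1) E.
by rewrite /= mulr1.
Qed.


Theorem lemma3p6 (R : comPzRingType) (S : comNzRingType)
    (phi : {rmorphism R -> S}) :
  ring_epi phi ->
  only_trivial_idempotents S ->
  (forall r : R, exists b : S, pw_inverse (phi r) b) ->
  (* A = Im(phi) is an integral domain (1 <> 0 holds since S is nonzero) *)
  (forall a b : S, in_image phi a -> in_image phi b ->
     a * b = 0 -> a = 0 \/ b = 0)
  /\
  (* for any concrete model D of A (an integral domain with an injective ring
     map onto Im(phi)), the ring map Frac(D) -> S extending D -> S exists and
     is an isomorphism *)
  (forall (D : idomainType) (i : {rmorphism D -> S}),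
     injective i -> (forall s : S, in_image i s <-> in_image phi s) ->
     exists F : {rmorphism {fraction D} -> S},
       (forall d : D, F (@FracField.tofrac D d) = i d) /\ bijective F)
  /\
  (* in particular S is a field *)
  (forall s : S, s <> 0 -> exists t : S, s * t = 1).
Proof.
move=> epi idem pw.
pose A := in_image phi.
have AD : forall x y, A x -> A y -> A (x + y).
  by move=> _ _ [r1 <-] [r2 <-]; exists (r1 + r2); rewrite rmorphD.
have AM : forall x y, A x -> A y -> A (x * y).
  by move=> _ _ [r1 <-] [r2 <-]; exists (r1 * r2); rewrite rmorphM.
have AN : forall x, A x -> A (- x).
  by move=> _ [r1 <-]; exists (- r1); rewrite rmorphN.
have A0 : A 0 by exists 0; rewrite rmorph0.
have A1 : A 1 by exists 1; rewrite rmorph1.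
have unitA : forall a, A a -> a = 0 \/ exists u, a * u = 1.
  move=> _ [r <-]; have [b [h1 h2]] := pw r.
  have E : (phi r * b) * (phi r * b) = phi r * b.
    transitivity ((phi r ^+ 2 * b) * b); first by rewrite expr2; ring.
    by rewrite -h1.
  case: (idem _ E) => e.
    by left; rewrite h1 expr2 -mulrA e mulr0.
  by right; exists b.
have dom : forall a b, A a -> A b -> a * b = 0 -> a = 0 \/ b = 0.
  move=> a b Aa Ab ab0; case: (unitA a Aa) => [->|[u au]]; [by left|right].
  by rewrite -[b]mul1r -au mulrAC ab0 mul0r.
pose K x := exists a b u, A a /\ A b /\ b * u = 1 /\ x = a * u.
have AK : forall a, A a -> K a.
  by move=> a Aa; exists a, 1, 1; rewrite !mulr1; do !split => //.
have K0 := AK 0 A0.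
have K1 := AK 1 A1.
have KD : forall x y, K x -> K y -> K (x + y).
  move=> _ _ [a [b [u [Aa [Ab [bu ->]]]]]] [a' [b' [u' [Aa' [Ab' [bu' ->]]]]]].
  exists (a * b' + a' * b), (b * b'), (u * u'); split; first by apply: AD; apply: AM.
  split; first exact: AM.
  split; first by rewrite mulrACA bu bu' mulr1.
  transitivity (a * u * (b' * u') + a' * u' * (b * u)); first by rewrite bu bu' !mulr1.
  ring.
have KM : forall x y, K x -> K y -> K (x * y).
  move=> _ _ [a [b [u [Aa [Ab [bu ->]]]]]] [a' [b' [u' [Aa' [Ab' [bu' ->]]]]]].
  exists (a * a'), (b * b'), (u * u'); split; first exact: AM.
  split; first exact: AM.
  split; first by rewrite mulrACA bu bu' mulr1.
  ring.
have KN : forall x, K x -> K (- x).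
  move=> _ [a [b [u [Aa [Ab [bu ->]]]]]].
  by exists (- a), b, u; rewrite mulNr; split => //; exact: AN.
have Kinv : forall x, K x -> x != 0 -> exists y, K y /\ x * y = 1.
  move=> _ [a [b [u [Aa [Ab [bu ->]]]]]] xn0.
  case: (unitA a Aa) => [a0|[v av]].
    by move: xn0; rewrite a0 mul0r eqxx.
  exists (b * v); split; first by exists b, a, v.
  transitivity ((a * v) * (b * u)); first ring.
  by rewrite av bu mulr1.
have allK : forall s, K s.
  move=> s; apply: NNPP => nKs.
  have [p [pD [pK [p1 ps]]]] := exists_proj K0 K1 KD KM KN Kinv nKs.
  have lp : linP A p by split => // a x Aa; exact: pK (AK a Aa).
  have := epi_sep epi lp s; rewrite p1 ps mulr1 => s0.
  by apply: nKs; rewrite s0.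
have field : forall s : S, s <> 0 -> exists t, s * t = 1.
  move=> s sn0; have [a [b [u [Aa [Ab [bu E]]]]]] := allK s.
  case: (unitA a Aa) => [a0|[v av]].
    by exfalso; apply: sn0; rewrite E a0 mul0r.
  exists (b * v); rewrite E; transitivity ((a * v) * (b * u)); first ring.
  by rewrite av bu mulr1.
split; first exact: dom.
split; last exact: field.
pose sinv (y : S) := epsilon (inhabits 0) (fun t => y * t = 1).
have sinvP : forall y, y != 0 -> y * sinv y = 1.
  move=> y yn0; apply: (epsilon_spec (inhabits 0) (fun t => y * t = 1)).
  by apply: field; exact/eqP.
have sinvU : forall y t, y * t = 1 -> sinv y = t.
  move=> y t yt; have yn0 : y != 0.
    by apply/eqP => y0; move: yt; rewrite y0 mul0r => /eqP; rewrite eq_sym oner_eq0.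
  by rewrite -[sinv y]mulr1 -yt mulrA [sinv y * y]mulrC (sinvP _ yn0) mul1r.
move=> D i iinj img.
have idn0 : forall d, d != 0 -> i d != 0.
  move=> d dn0; apply/eqP => id0; move/eqP: dn0; apply; apply: iinj.
  by rewrite id0 rmorph0.
pose tof := @FracField.tofrac D.
have tofn0 : forall d, d != 0 -> tof d != 0 by move=> d; rewrite tofrac_eq0.
pose F (x : {fraction D}) := epsilon (inhabits 0)
  (fun s => exists n d, d != 0 /\ x = tof n / tof d /\ s = i n * sinv (i d)).
have FE : forall n d, d != 0 -> F (tof n / tof d) = i n * sinv (i d).
  move=> n d dn0.
  have : exists s, exists n' d', d' != 0 /\ tof n / tof d = tof n' / tof d' /\
      s = i n' * sinv (i d') by exists (i n * sinv (i d)), n, d.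
  rewrite /F; move=> /(epsilon_spec (inhabits 0)) [n' [d' [dn0' [Ex ->]]]].
  have Ed : n * d' = n' * d.
    apply/eqP; rewrite -tofrac_eq !tofracM -eqr_div ?tofn0 //; exact/eqP.
  have u := sinvP _ (idn0 d dn0); have u' := sinvP _ (idn0 d' dn0').
  have key : i n * sinv (i d) * (i d' * sinv (i d')) =
             i n' * sinv (i d') * (i d * sinv (i d)).
    transitivity (i (n * d') * sinv (i d) * sinv (i d')); first by rewrite rmorphM; ring.
    by rewrite Ed rmorphM; ring.
  by move: key; rewrite u u' !mulr1.
have Hz : zmod_morphism F.
  move=> x y; have [n [d [dn0 ->]]] := frac_rep x; have [n' [d' [dn0' ->]]] := frac_rep y.
  have -> : tof n / tof d - tof n' / tof d' = tof (n * d' - n' * d) / tof (d * d').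
    by rewrite /tof tofracB !tofracM divB_gen ?tofn0.
  rewrite !FE ?mulf_neq0 //.
  have u := sinvP _ (idn0 d dn0); have u' := sinvP _ (idn0 d' dn0').
  rewrite (sinvU _ (sinv (i d) * sinv (i d'))); last by rewrite rmorphM mulrACA u u' mulr1.
  transitivity (i n * sinv (i d) * (i d' * sinv (i d')) - i n' * sinv (i d') * (i d * sinv (i d))).
    by rewrite rmorphB !rmorphM; ring.
  by rewrite u u' !mulr1.
have Hm : monoid_morphism F.
  split.
    have -> : (1 : {fraction D}) = tof 1 / tof 1 by rewrite /tof tofrac1 divr1.
    rewrite FE ?oner_neq0 // rmorph1 mul1r; apply: sinvU; exact: mulr1.
  move=> x y; have [n [d [dn0 ->]]] := frac_rep x; have [n' [d' [dn0' ->]]] := frac_rep y.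
  have -> : tof n / tof d * (tof n' / tof d') = tof (n * n') / tof (d * d').
    by rewrite /tof !tofracM mulf_div.
  rewrite !FE ?mulf_neq0 //.
  have u := sinvP _ (idn0 d dn0); have u' := sinvP _ (idn0 d' dn0').
  rewrite (sinvU _ (sinv (i d) * sinv (i d'))); last by rewrite rmorphM mulrACA u u' mulr1.
  by rewrite rmorphM; ring.
have Fdef : forall d, F (tof d) = i d.
  move=> d; have -> : tof d = tof d / tof 1 by rewrite /tof tofrac1 divr1.
  by rewrite FE ?oner_neq0 // rmorph1 (sinvU 1 1) ?mulr1.
have Finj : injective F.
  move=> x y Fxy; apply/eqP; rewrite -subr_eq0; apply/eqP.
  have [n [d [dn0 E]]] := frac_rep (x - y).
  have : F (x - y) = 0 by rewrite (Hz x y) Fxy subrr.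
  rewrite E FE // => h.
  have in0 : i n = 0.
    by rewrite -[i n]mulr1 -(sinvP _ (idn0 _ dn0)) mulrCA h mulr0.
  have n0 : n = 0 by apply: iinj; rewrite in0 rmorph0.
  by rewrite n0 /tof tofrac0 mul0r.
have Fsurj : forall s, exists x, F x = s.
  move=> s; have [a [b [u [Aa [Ab [bu ->]]]]]] := allK s.
  have [n na] := (img a).2 Aa.
  have [d db] := (img b).2 Ab.
  have dn0 : d != 0.
    apply/eqP => d0; move: bu; rewrite -db d0 rmorph0 mul0r => /eqP.
    by rewrite eq_sym oner_eq0.
  by exists (tof n / tof d); rewrite FE // na db (sinvU _ _ bu).
exists (mk_rmorph (Hz, Hm) : {rmorphism {fraction D} -> S}); split.
  move=> d; exact: Fdef.
change (bijective F).
exists (fun s => epsilon (inhabits 0) (fun x => F x = s)).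
  move=> x; apply: Finj.
  exact: (epsilon_spec (inhabits 0) (fun y => F y = F x) (ex_intro _ x erefl)).
move=> s; exact: (epsilon_spec (inhabits 0) (fun y => F y = s) (Fsurj s)).
Qed.
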